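(* The group $\operatorname{Homeo}_c(\mathbb{R})$ of compactly supported homeomorphisms of $\mathbb{R}$ is not mitotic.
   Context: A subgroup $H \leq \Gamma$ has a mitosis in $\Gamma$ if there are elements $s,d \in \Gamma$ such that $h\cdot s^{-1}hs = d^{-1}hd$ for all $h \in H$ and $[h, s^{-1}h's] = 1$ for all $h,h' \in H$. A group $\Gamma$ is mitotic if every finitely generated subgroup of $\Gamma$ has a mitosis in $\Gamma$. *)

(* Defs.v *)
From Stdlib Require Import Reals Lra List.
Open Scope R_scope.

Record homeo_c := HomeoC {
  hfun : R -> R;
  hinvfun : R -> R;
  hfun_cont : continuity hfun;
  hinvfun_cont : continuity hinvfun;
  hfunK : forall x, hinvfun (hfun x) = x;
  hinvfunK : forall x, hfun (hinvfun x) = x;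
  hfun_supp : exists a b : R, forall x, x < a \/ b < x -> hfun x = x
}.

Definition heq (f g : homeo_c) : Prop := forall x, hfun f x = hfun g x.

Lemma id_supp : exists a b : R, forall x : R, x < a \/ b < x -> (fun y => y) x = x.
Proof. exists 0, 0; auto. Qed.

Lemma cont_id : continuity (fun x : R => x).
Proof. exact (derivable_continuous _ derivable_id). Qed.

Definition hone : homeo_c :=
  HomeoC (fun x => x) (fun x => x) cont_id cont_id
    (fun _ => eq_refl) (fun _ => eq_refl) id_supp.

Lemma mul_supp (f g : homeo_c) :
  exists a b : R, forall x, x < a \/ b < x -> hfun f (hfun g x) = x.
Proof.
  destruct (hfun_supp f) as [a1 [b1 H1]]; destruct (hfun_supp g) as [a2 [b2 H2]].
  exists (Rmin a1 a2), (Rmax b1 b2); intros x Hx.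
  assert (Hm1 := Rmin_l a1 a2); assert (Hm2 := Rmin_r a1 a2).
  assert (HM1 := Rmax_l b1 b2); assert (HM2 := Rmax_r b1 b2).
  rewrite H2 by lra; apply H1; lra.
Qed.

Definition hmul (f g : homeo_c) : homeo_c :=
  HomeoC (fun x => hfun f (hfun g x)) (fun x => hinvfun g (hinvfun f x))
    (continuity_comp (hfun g) (hfun f) (hfun_cont g) (hfun_cont f))
    (continuity_comp (hinvfun f) (hinvfun g) (hinvfun_cont f) (hinvfun_cont g))
    (fun x => eq_trans (f_equal (hinvfun g) (hfunK f (hfun g x))) (hfunK g x))
    (fun x => eq_trans (f_equal (hfun f) (hinvfunK g (hinvfun f x))) (hinvfunK f x))
    (mul_supp f g).

Lemma inv_supp (f : homeo_c) :
  exists a b : R, forall x, x < a \/ b < x -> hinvfun f x = x.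
Proof.
  destruct (hfun_supp f) as [a [b H]]; exists a, b; intros x Hx.
  rewrite <- (H x Hx) at 1. apply hfunK.
Qed.

Definition hinv (f : homeo_c) : homeo_c :=
  HomeoC (hinvfun f) (hfun f) (hinvfun_cont f) (hfun_cont f)
    (hinvfunK f) (hfunK f) (inv_supp f).

Definition hcomm (h k : homeo_c) : homeo_c :=
  hmul (hmul (hinv h) (hinv k)) (hmul h k).

Inductive gen_by (S : list homeo_c) : homeo_c -> Prop :=
| gen_one : gen_by S hone
| gen_in : forall g, In g S -> gen_by S g
| gen_mul : forall g h, gen_by S g -> gen_by S h -> gen_by S (hmul g h)
| gen_inv : forall g, gen_by S g -> gen_by S (hinv g).

Definition has_mitosis (H : homeo_c -> Prop) : Prop :=
  exists s d : homeo_c,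
    (forall h, H h -> heq (hmul h (hmul (hinv s) (hmul h s)))
                          (hmul (hinv d) (hmul h d))) /\
    (forall h h', H h -> H h' -> heq (hcomm h (hmul (hinv s) (hmul h' s))) hone).

Definition homeo_c_mitotic : Prop :=
  forall S : list homeo_c, has_mitosis (gen_by S).

(* Main.v *)
Require Import Defs.
From Stdlib Require Import Reals List Lra.
Open Scope R_scope.

Definition mx (a b : R) := (a + b + Rabs (a - b)) / 2.
Definition mn (a b : R) := (a + b - Rabs (a - b)) / 2.

Lemma mx_spec a b : (a <= b -> mx a b = b) /\ (b <= a -> mx a b = a).
Proof. unfold mx; split; intro H; [rewrite Rabs_left1 by lra | rewrite Rabs_right by lra]; lra. Qed.
Lemma mn_spec a b : (a <= b -> mn a b = a) /\ (b <= a -> mn a b = b).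
Proof. unfold mn; split; intro H; [rewrite Rabs_left1 by lra | rewrite Rabs_right by lra]; lra. Qed.

Lemma abs_cont (f : R -> R) : continuity f -> continuity (fun x => Rabs (f x)).
Proof. intros Hf. exact (continuity_comp f Rabs Hf Rcontinuity_abs). Qed.

Lemma mx_cont (f g : R -> R) : continuity f -> continuity g ->
  continuity (fun x => mx (f x) (g x)).
Proof.
  intros Hf Hg x. unfold mx, Rdiv.
  apply continuity_pt_mult; [| apply continuity_pt_const; intros ? ?; reflexivity].
  apply continuity_pt_plus; [apply continuity_pt_plus; auto|].
  apply (abs_cont (fun x => f x - g x)). intro y; apply continuity_pt_minus; auto.
Qed.
Lemma mn_cont (f g : R -> R) : continuity f -> continuity g ->
  continuity (fun x => mn (f x) (g x)).
Proof.
  intros Hf Hg x. unfold mn, Rdiv.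
  apply continuity_pt_mult; [| apply continuity_pt_const; intros ? ?; reflexivity].
  apply continuity_pt_minus; [apply continuity_pt_plus; auto|].
  apply (abs_cont (fun x => f x - g x)). intro y; apply continuity_pt_minus; auto.
Qed.

Lemma aff_cont (a b : R) : continuity (fun x => a * x + b).
Proof. intro x. apply continuity_pt_plus; [apply continuity_pt_scal; apply cont_id | apply continuity_pt_const; intros ? ?; reflexivity]. Qed.

Definition bf (c x : R) := mx x (mn (3/2 * x + (- (1/2) * c)) (1/2 * x + (1 + c / 2))).
Definition bi (c y : R) := mn y (mx (2/3 * y + (c / 3)) (2 * y + (- 2 - c))).

Lemma mx_cases a b : (a <= b /\ mx a b = b) \/ (b < a /\ mx a b = a).
Proof. destruct (Rle_lt_dec a b); [left|right]; split; auto; apply mx_spec; lra. Qed.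
Lemma mn_cases a b : (a <= b /\ mn a b = a) \/ (b < a /\ mn a b = b).
Proof. destruct (Rle_lt_dec a b); [left|right]; split; auto; apply mn_spec; lra. Qed.

Ltac has_m t := match t with context [mx _ _] => idtac | context [mn _ _] => idtac end.
Ltac crunch :=
  repeat match goal with
  | |- context [mx ?a ?b] => tryif (first [has_m a | has_m b]) then fail else
      (let E := fresh in destruct (mx_cases a b) as [[? E]|[? E]]; rewrite E; clear E)
  | |- context [mn ?a ?b] => tryif (first [has_m a | has_m b]) then fail else
      (let E := fresh in destruct (mn_cases a b) as [[? E]|[? E]]; rewrite E; clear E)
  end; lra.

Lemma bfK c x : bi c (bf c x) = x.
Proof. unfold bf, bi. crunch. Qed.
Lemma biK c x : bf c (bi c x) = x.
Proof. unfold bf, bi. crunch. Qed.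
Lemma bf_ge c x : x <= bf c x.
Proof. unfold bf. crunch. Qed.
Lemma bf_fix c x : bf c x = x <-> ~ (c < x < c + 2).
Proof.
  split; intro H.
  - intros [H1 H2]. assert (x < bf c x) by (unfold bf; crunch). lra.
  - assert (x <= c \/ c + 2 <= x) by (destruct (Rle_dec x c); [left; lra|];
      destruct (Rle_dec (c+2) x); [right; lra|]; exfalso; apply H; lra).
    unfold bf; crunch.
Qed.
Lemma bf_supp c : exists a b : R, forall x, x < a \/ b < x -> bf c x = x.
Proof. exists c, (c + 2). intros x Hx. apply bf_fix. lra. Qed.

Lemma bf_cont c : continuity (bf c).
Proof. unfold bf. apply mx_cont; [apply cont_id|]. apply mn_cont; apply aff_cont. Qed.
Lemma bi_cont c : continuity (bi c).
Proof. unfold bi. apply mn_cont; [apply cont_id|]. apply mx_cont; apply aff_cont. Qed.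

Definition bump (c : R) : homeo_c :=
  HomeoC (bf c) (bi c) (bf_cont c) (bi_cont c) (bfK c) (biK c) (bf_supp c).

Lemma homeo_inj (f : homeo_c) x y : hfun f x = hfun f y -> x = y.
Proof. intro H. rewrite <- (hfunK f x), <- (hfunK f y), H. reflexivity. Qed.

Lemma homeo_incr (f : homeo_c) x y : x < y -> hfun f x < hfun f y.
Proof.
  intro Hxy. destruct (Rlt_le_dec (hfun f x) (hfun f y)) as [H|H]; auto.
  exfalso. destruct (Req_dec (hfun f x) (hfun f y)) as [E|E].
  { apply homeo_inj in E. lra. }
  destruct (hfun_supp f) as [a [b Hs]].
  set (z := Rmax (Rmax y b) (hfun f x) + 1).
  assert (Hz1 := Rmax_l (Rmax y b) (hfun f x)). assert (Hz2 := Rmax_r (Rmax y b) (hfun f x)).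
  assert (Hz3 := Rmax_l y b). assert (Hz4 := Rmax_r y b).
  assert (Fz : hfun f z = z) by (apply Hs; unfold z; lra).
  destruct (IVT (fun w => hfun f w - hfun f x) y z) as [c [Hc1 Hc2]].
  - intro w. apply continuity_pt_minus; [apply hfun_cont | apply continuity_pt_const; intros ? ?; reflexivity].
  - unfold z; lra.
  - lra.
  - rewrite Fz. unfold z; lra.
  - assert (hfun f c = hfun f x) by lra. apply homeo_inj in H0. lra.
Qed.

Lemma homeo_le (f : homeo_c) x y : x <= y -> hfun f x <= hfun f y.
Proof. intro H. destruct (Req_dec x y). subst; lra. left; apply homeo_incr; lra. Qed.

Lemma homeo_lt_rev (f : homeo_c) x y : hfun f x < hfun f y -> x < y.
Proof. intro H. destruct (Rlt_le_dec x y); auto. apply (homeo_le f) in r. lra. Qed.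

Lemma endpoints (f : R -> R) (k : homeo_c) a b :
  a < b ->
  (forall x, f (hfun k x) = hfun k (f x)) ->
  (forall x, f x = x <-> ~ (a < x < b)) ->
  hfun k a = a /\ hfun k b = b.
Proof.
  intros Hab Hc Hf.
  assert (P : forall x, f x = x <-> f (hfun k x) = hfun k x).
  { intro x; split; intro E.
    - rewrite Hc, E; reflexivity.
    - rewrite Hc in E. apply homeo_inj in E. exact E. }
  set (m := (a + b) / 2).
  assert (Na : f a = a) by (apply Hf; lra).
  assert (Nb : f b = b) by (apply Hf; lra).
  assert (Nm : f m <> m) by (intro E; apply Hf in E; apply E; unfold m; lra).
  assert (Km : a < hfun k m < b).
  { destruct (Rlt_le_dec a (hfun k m)); destruct (Rlt_le_dec (hfun k m) b); try lra;
    exfalso; apply Nm; apply (proj2 (P m)); apply Hf; lra. }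
  assert (Ka : ~ (a < hfun k a < b)) by (apply Hf; apply (proj1 (P a)); exact Na).
  assert (Kb : ~ (a < hfun k b < b)) by (apply Hf; apply (proj1 (P b)); exact Nb).
  assert (la : hfun k a < hfun k m) by (apply homeo_incr; unfold m; lra).
  assert (lb : hfun k m < hfun k b) by (apply homeo_incr; unfold m; lra).
  set (y := hinvfun k a). set (y' := hinvfun k b). set (z := hinvfun k m).
  assert (Ey : hfun k y = a) by apply hinvfunK.
  assert (Ey' : hfun k y' = b) by apply hinvfunK.
  assert (Ez : hfun k z = m) by apply hinvfunK.
  assert (Fy : ~ (a < y < b)) by (apply Hf; apply (proj2 (P y)); rewrite Ey; exact Na).
  assert (Fy' : ~ (a < y' < b)) by (apply Hf; apply (proj2 (P y')); rewrite Ey'; exact Nb).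
  assert (Fz : a < z < b).
  { destruct (Rlt_le_dec a z); destruct (Rlt_le_dec z b); try lra;
    exfalso; apply Nm; rewrite <- Ez; apply (proj1 (P z)); apply Hf; lra. }
  assert (yz : y < z) by (apply (homeo_lt_rev k); rewrite Ey, Ez; unfold m; lra).
  assert (zy : z < y') by (apply (homeo_lt_rev k); rewrite Ey', Ez; unfold m; lra).
  assert (y <= a) by (destruct (Rle_lt_dec y a); auto; exfalso; apply Fy; lra).
  assert (b <= y') by (destruct (Rle_lt_dec b y'); auto; exfalso; apply Fy'; lra).
  apply (homeo_le k) in H. apply (homeo_le k) in H0. rewrite Ey in H. rewrite Ey' in H0.
  split.
  - destruct (Rle_lt_dec (hfun k a) a); try lra; exfalso; apply Ka; lra.
  - destruct (Rle_lt_dec b (hfun k b)); try lra; exfalso; apply Kb; lra.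
Qed.

Lemma comm_of (a b : homeo_c) : heq (hcomm a b) hone ->
  forall x, hfun a (hfun b x) = hfun b (hfun a x).
Proof.
  intros H x. specialize (H x). simpl in H.
  apply (f_equal (hfun a)) in H. rewrite hinvfunK in H.
  apply (f_equal (hfun b)) in H. rewrite hinvfunK in H. auto.
Qed.

Lemma notin a x b : ~ (a < x < b) -> x <= a \/ b <= x.
Proof. intro H. destruct (Rle_lt_dec x a); auto. destruct (Rle_lt_dec b x); auto. exfalso; apply H; split; auto. Qed.

Theorem lemma3p18 : ~ homeo_c_mitotic.
Proof.
  intro Hm. set (h := bump 0). set (g := bump 1).
  destruct (Hm (h :: g :: nil)) as [s [d [H1 H2]]].
  assert (Gh : gen_by (h :: g :: nil) h) by (apply gen_in; simpl; auto).
  assert (Gg : gen_by (h :: g :: nil) g) by (apply gen_in; simpl; auto).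
  set (U := hmul (hinv s) (hmul h s)).
  assert (Chu := comm_of _ _ (H2 h h Gh Gh)). fold U in Chu.
  assert (Cgu := comm_of _ _ (H2 g h Gg Gh)). fold U in Cgu.
  assert (E1 := H1 h Gh). fold U in E1.
  set (S := hfun s) in *. set (sg := hinvfun s) in *.
  assert (Ssg : forall y, S (sg y) = y) by apply hinvfunK.
  assert (sgS : forall y, sg (S y) = y) by apply hfunK.
  assert (Uf : forall x, hfun U x = sg (bf 0 (S x))) by reflexivity.
  assert (Ufix : forall x, hfun U x = x <-> ~ (sg 0 < x < sg 2)).
  { intro x. rewrite Uf. split; intro E.
    - apply (f_equal S) in E. rewrite Ssg in E. apply bf_fix in E.
      intros [Q1 Q2]. apply E.
      apply (homeo_incr s) in Q1. apply (homeo_incr s) in Q2.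
      change (hfun s) with S in Q1, Q2. rewrite Ssg in Q1, Q2. lra.
    - assert (bf 0 (S x) = S x).
      { apply bf_fix. intros [Q1 Q2]. rewrite Rplus_0_l in Q2. apply E.
        apply (homeo_incr (hinv s)) in Q1. apply (homeo_incr (hinv s)) in Q2.
        change (hfun (hinv s)) with sg in Q1, Q2. rewrite sgS in Q1, Q2. split; lra. }
      rewrite H. apply sgS. }
  assert (Uge : forall x, x <= hfun U x).
  { intro x. rewrite Uf. rewrite <- (sgS x) at 1.
    apply (homeo_le (hinv s)). apply bf_ge. }
  assert (p02 : sg 0 < sg 2) by (apply (homeo_incr (hinv s)); lra).
  destruct (endpoints (bf 0) U 0 (0 + 2)) as [U0 U2]; [lra | exact Chu | apply bf_fix |].
  destruct (endpoints (bf 1) U 1 (1 + 2)) as [U1 U3]; [lra | exact Cgu | apply bf_fix |].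
  destruct (endpoints (hfun U) h (sg 0) (sg 2)) as [hp hq]; [lra | intro; symmetry; apply Chu | exact Ufix |].
  rewrite Rplus_0_l in U2.
  change (hfun h) with (bf 0) in hp, hq.
  apply bf_fix in hp. apply bf_fix in hq.
  assert (Hu0 : ~ (sg 0 < 0 < sg 2)) by (apply Ufix; rewrite U0; lra).
  assert (Hu1 : ~ (sg 0 < 1 < sg 2)) by (apply Ufix; exact U1).
  assert (Hu2 : ~ (sg 0 < 2 < sg 2)) by (apply Ufix; rewrite U2; lra).
  apply notin in hp. apply notin in hq. apply notin in Hu0. apply notin in Hu1. apply notin in Hu2.
  set (D := hfun d) in *.
  assert (Fix : forall x, bf 0 (hfun U x) = x <-> ~ (0 < D x < 0 + 2)).
  { intro x. change (bf 0 (hfun U x)) with (hfun (hmul h U) x). rewrite (E1 x). simpl. fold D. rewrite <- bf_fix. split; intro E.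
    - apply (f_equal D) in E. unfold D in E |- *. rewrite hinvfunK in E. exact E.
    - rewrite E. apply hfunK. }
  assert (NF : forall x, hfun U x <> x -> 0 < D x < 2).
  { intros x Hx. destruct (Rlt_le_dec 0 (D x)); destruct (Rlt_le_dec (D x) 2); try lra;
    exfalso; assert (bf 0 (hfun U x) = x) by (apply Fix; lra);
    assert (Q := bf_ge 0 (hfun U x)); assert (Q' := Uge x); lra. }
  assert (N1 : 0 < D 1 < 2).
  { destruct (Rlt_le_dec 0 (D 1)); destruct (Rlt_le_dec (D 1) 2); try lra;
    exfalso; assert (bf 0 (hfun U 1) = 1) by (apply Fix; lra);
    rewrite U1 in H; apply bf_fix in H; lra. }
  set (x1 := (sg 0 + sg 2) / 2).
  assert (Nx1 : 0 < D x1 < 2) by (apply NF; intro E; apply Ufix in E; unfold x1 in E; lra).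
  destruct (Rle_lt_dec (sg 2) 0).
  - assert (F0 : ~ (0 < D 0 < 0 + 2)) by (apply Fix; rewrite U0; apply bf_fix; lra).
    assert (D x1 < D 0) by (apply homeo_incr; unfold x1; lra).
    assert (D 0 < D 1) by (apply homeo_incr; lra). lra.
  - assert (2 <= sg 0).
    { destruct (Rle_lt_dec 2 (sg 0)); auto. exfalso.
      destruct (Rle_lt_dec (sg 0) 0); destruct (Rle_lt_dec 2 (sg 2)); lra. }
    assert (F2 : ~ (0 < D 2 < 0 + 2)) by (apply Fix; rewrite U2; apply bf_fix; lra).
    assert (D 2 < D x1) by (apply homeo_incr; unfold x1; lra).
    assert (D 1 < D 2) by (apply homeo_incr; lra). lra.
Qed.
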